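(* An integral domain $D$ is a $\ast$-SH domain of type $1$ if and only if $D$ is a $\ast$-weakly Krull domain.
   Context: $\ast$ is a star operation on $D$ of finite character. A $\ast$-ideal is a nonzero fractional ideal $I$ with $I^\ast=I$; it is of finite type if $I=J^\ast$ for some nonzero finitely generated $J$. A maximal $\ast$-ideal is an integral $\ast$-ideal maximal among proper integral $\ast$-ideals. A $\ast$-homog ideal is an integral $\ast$-ideal $I$ of finite type with $I\subsetneq D$ such that $(J+L)^{\ast}\neq D$ for every pair $J,L$ of proper integral $\ast$-ideals of finite type containing $I$; such $I$ lies in a unique maximal $\ast$-ideal $M(I)$. $D$ is a $\ast$-SH domain if every $xD$, $x$ a nonzero nonunit, is a $\ast$-product $(I_1\cdots I_n)^\ast$ of finitely many $\ast$-homog ideals. A $\ast$-homog ideal $I$ is of type $1$ if for every $x\in M(I)\setminus\{0\}$ there is a positive integer $n$ with $x^nD_{M(I)}\cap D\subseteq I$. $D$ is a $\ast$-SH domain of type $1$ if for every nonzero nonunit $x$, $xD$ is a $\ast$-product of finitely many $\ast$-homog ideals of type $1$. $D$ is a $\ast$-weakly Krull domain if $D$ is a $\ast$-SH domain in which every maximal $\ast$-ideal has height $1$. *)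

(* Defs.v *)
(* Star operations on an integral domain D, with fractional
   ideals represented as predicates (K -> Prop) on the fraction field
   K = {fraction D}. *)
From HB Require Import structures.
From mathcomp Require Import all_boot all_order all_algebra.
Set Implicit Arguments. Unset Strict Implicit. Unset Printing Implicit Defensive.
Import Order.TTheory GRing.Theory Num.Theory.
Local Open Scope ring_scope.

Section StarDefs.
Variable D : idomainType.
Local Notation K := {fraction D}.
Definition emb (d : D) : K := @FracField.tofrac D d.

Definition ksubset (A B : K -> Prop) := forall z, A z -> B z.
Definition kseteq (A B : K -> Prop) := forall z, A z <-> B z.

Definition Dset : K -> Prop := fun z => exists d : D, z = emb d.

Definition submodule (A : K -> Prop) :=
  [/\ A 0, (forall a b, A a -> A b -> A (a + b)) &
      (forall (d : D) a, A a -> A (emb d * a))].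

Definition knonzero (A : K -> Prop) := exists z, A z /\ z != 0.

Definition frac_ideal (A : K -> Prop) :=
  [/\ submodule A, knonzero A &
      exists d : D, d != 0 /\ forall z, A z -> Dset (emb d * z)].

Definition kscale (x : K) (A : K -> Prop) : K -> Prop :=
  fun z => exists a, A a /\ z = x * a.

Definition principal (x : K) := kscale x Dset.

Definition span (s : seq K) : K -> Prop :=
  fun z => exists c : nat -> D, z = \sum_(i < size s) emb (c i) * s`_i.

Definition fin_gen (A : K -> Prop) := exists s : seq K, kseteq A (span s).

Definition ksum (A B : K -> Prop) : K -> Prop :=
  fun z => exists a b, [/\ A a, B b & z = a + b].

Definition kmul (A B : K -> Prop) : K -> Prop :=
  fun z => exists (n : nat) (a b : nat -> K),
    (forall i, (i < n)%N -> A (a i) /\ B (b i)) /\ z = \sum_(i < n) a i * b i.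

Definition kprod (s : seq (K -> Prop)) : K -> Prop := foldr kmul Dset s.

Definition is_star_op (star : (K -> Prop) -> (K -> Prop)) :=
  (forall A, frac_ideal A -> frac_ideal (star A)) /\
  [/\ (forall x : K, x != 0 -> kseteq (star (principal x)) (principal x)),
      (forall (x : K) A, x != 0 -> frac_ideal A ->
          kseteq (star (kscale x A)) (kscale x (star A))),
      (forall A, frac_ideal A -> ksubset A (star A)),
      (forall A B, frac_ideal A -> frac_ideal B -> ksubset A B ->
          ksubset (star A) (star B)) &
      (forall A, frac_ideal A -> kseteq (star (star A)) (star A))].

Definition finite_character (star : (K -> Prop) -> (K -> Prop)) :=
  forall A, frac_ideal A ->
    kseteq (star A)
      (fun z => exists J, [/\ fin_gen J, knonzero J, ksubset J A & star J z]).

Section WithStar.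
Variable star : (K -> Prop) -> (K -> Prop).

Definition star_ideal (A : K -> Prop) := frac_ideal A /\ kseteq (star A) A.

Definition finite_type (A : K -> Prop) :=
  star_ideal A /\ exists J, [/\ fin_gen J, knonzero J & kseteq A (star J)].

Definition integral (A : K -> Prop) := ksubset A Dset.

Definition proper_integral (A : K -> Prop) := integral A /\ ~ ksubset Dset A.

Definition max_star (M : K -> Prop) :=
  [/\ star_ideal M, proper_integral M &
      forall N, star_ideal N -> proper_integral N -> ksubset M N -> kseteq N M].

Definition star_homog (I : K -> Prop) :=
  [/\ finite_type I, proper_integral I &
      forall J L, finite_type J -> proper_integral J ->
                  finite_type L -> proper_integral L ->
                  ksubset I J -> ksubset I L ->
                  ~ kseteq (star (ksum J L)) Dset].

(* x^n D_M ∩ D, as a subset of K *)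
Definition loc_pow_cap (M : K -> Prop) (x : K) (n : nat) : K -> Prop :=
  fun z => Dset z /\ exists (a s : D), ~ M (emb s) /\ z * emb s = x ^+ n * emb a.

(* M(I) is the unique maximal star-ideal containing I *)
Definition star_homog_type1 (I : K -> Prop) :=
  star_homog I /\
  forall M, max_star M -> ksubset I M ->
    forall x, M x -> x != 0 ->
      exists n : nat, (0 < n)%N /\ ksubset (loc_pow_cap M x n) I.

Definition star_SH :=
  forall x : D, x != 0 -> x \isn't a GRing.unit ->
    exists s : seq (K -> Prop),
      (forall i, (i < size s)%N -> star_homog (nth Dset s i)) /\
      kseteq (principal (emb x)) (star (kprod s)).

Definition star_SH_type1 :=
  forall x : D, x != 0 -> x \isn't a GRing.unit ->
    exists s : seq (K -> Prop),
      (forall i, (i < size s)%N -> star_homog_type1 (nth Dset s i)) /\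
      kseteq (principal (emb x)) (star (kprod s)).

End WithStar.

Definition prime_ideal (P : K -> Prop) :=
  [/\ submodule P, integral P, ~ P 1 &
      forall a b : D, P (emb a * emb b) -> P (emb a) \/ P (emb b)].

Definition height_one (M : K -> Prop) :=
  [/\ knonzero M, prime_ideal M &
      forall P, prime_ideal P -> ksubset P M ->
        kseteq P (fun z => z = 0) \/ kseteq P M].

Definition star_weakly_Krull (star : (K -> Prop) -> (K -> Prop)) :=
  star_SH star /\ forall M, max_star star M -> height_one M.

End StarDefs.

(* Main.v *)
Require Import Defs.
From HB Require Import structures.
From mathcomp Require Import all_boot all_order all_algebra.
From mathcomp Require classical_sets.
From mathcomp Require Import ring.
From Stdlib Require Import Classical FunctionalExtensionality PropExtensionality.
Set Implicit Arguments. Unset Strict Implicit. Unset Printing Implicit Defensive.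
Import GRing.Theory.
Local Open Scope ring_scope.

Section Basics.
Variable D : idomainType.
Local Notation K := {fraction D}.
Local Notation DS := (@Dset D).

Lemma kseteq_eq (A B : K -> Prop) : kseteq A B -> A = B.
Proof.
move=> h; apply: functional_extensionality => z.
by apply: propositional_extensionality; exact: h.
Qed.

Lemma embD (a b : D) : emb (a + b) = emb a + emb b.
Proof. exact: tofracD. Qed.
Lemma embM (a b : D) : emb (a * b) = emb a * emb b.
Proof. exact: tofracM. Qed.
Lemma emb1 : emb (1 : D) = 1.
Proof. exact: tofrac1. Qed.
Lemma emb0 : emb (0 : D) = 0.
Proof. exact: tofrac0. Qed.
Lemma embN (a : D) : emb (- a) = - emb a.
Proof. exact: tofracN. Qed.
Lemma embX (a : D) n : emb (a ^+ n) = emb a ^+ n.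
Proof. exact: tofracXn. Qed.
Lemma emb_eq0 (a : D) : (emb a == 0) = (a == 0).
Proof. exact: tofrac_eq0. Qed.
Lemma emb_inj (a b : D) : emb a = emb b -> a = b.
Proof. by move=> h; apply/eqP; rewrite -tofrac_eq; apply/eqP. Qed.

Lemma fracP (x : K) : exists p q : D, q != 0 /\ x * emb q = emb p.
Proof.
rewrite /emb.
elim/quotW: x => r.
exists (\n_r), (\d_r); split; first exact: denom_ratioP.
unlock FracField.tofrac.
rewrite -[_ * _]FracField.pi_mul.
apply/eqmodP; rewrite /= FracField.equivfE /=.
rewrite /FracField.mulf /=.
rewrite !numden_Ratio ?mulr1 ?mul1r ?oner_eq0 //;
  [by apply/eqP; apply: (@mulrC D)| exact: denom_ratioP..].
Qed.

Lemma DsetE z : DS z -> exists d, z = emb d. Proof. by []. Qed.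
Lemma Dset_emb d : DS (emb d). Proof. by exists d. Qed.
Lemma Dset0 : DS 0. Proof. by exists 0; rewrite emb0. Qed.
Lemma Dset1 : DS 1. Proof. by exists 1; rewrite emb1. Qed.
Lemma DsetD a b : DS a -> DS b -> DS (a + b).
Proof. by move=> [x ->] [y ->]; exists (x + y); rewrite embD. Qed.
Lemma DsetM a b : DS a -> DS b -> DS (a * b).
Proof. by move=> [x ->] [y ->]; exists (x * y); rewrite embM. Qed.
Lemma DsetX a n : DS a -> DS (a ^+ n).
Proof. by move=> [x ->]; exists (x ^+ n); rewrite embX. Qed.

Lemma Dset_sum n (F : 'I_n -> K) : (forall i, DS (F i)) -> DS (\sum_(i < n) F i).
Proof.
move=> h; apply: (big_ind DS) => //; [exact: Dset0| exact: DsetD].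
Qed.

Lemma sm_sum (A : K -> Prop) n (F : 'I_n -> K) : submodule A ->
  (forall i, A (F i)) -> A (\sum_(i < n) F i).
Proof.
case=> h0 hD _ h; apply: (big_ind A) => //.
Qed.

Lemma smM (A : K -> Prop) z a : submodule A -> DS z -> A a -> A (z * a).
Proof. by case=> _ _ hZ [d ->]; apply: hZ. Qed.

Lemma sm1 (A : K -> Prop) : submodule A -> A 1 -> ksubset DS A.
Proof. by move=> hA h1 z hz; rewrite -[z]mulr1; apply: smM. Qed.

Lemma smDset : submodule DS.
Proof. split; [exact: Dset0| exact: DsetD| move=> d a ha; apply: DsetM => //; exact: Dset_emb]. Qed.

Lemma fiDset : frac_ideal DS.
Proof.
split; first exact: smDset.
  by exists 1; split; [exact: Dset1| exact: oner_neq0].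
by exists 1; split; [exact: oner_neq0| move=> z hz; rewrite emb1 mul1r].
Qed.

Lemma fi_sub (A B : K -> Prop) : submodule A -> knonzero A -> ksubset A B ->
  frac_ideal B -> frac_ideal A.
Proof.
move=> sA nA AB [_ _ [d [d0 hd]]]; split => //.
by exists d; split => // z /AB; apply: hd.
Qed.

Lemma fi_integral (A : K -> Prop) : submodule A -> knonzero A -> integral A ->
  frac_ideal A.
Proof. by move=> sA nA iA; apply: (fi_sub sA nA iA fiDset). Qed.

Lemma fi_kscale (e : D) (A : K -> Prop) : e != 0 -> frac_ideal A ->
  frac_ideal (kscale (emb e) A).
Proof.
move=> e0 [[h0 hD hZ] [a [ha a0]] [d [d0 hd]]]; split.
- split.
  + by exists 0; split => //; rewrite mulr0.
  + move=> _ _ [x [hx ->]] [y [hy ->]]; exists (x + y); split; first exact: hD.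
    by rewrite mulrDr.
  + move=> c _ [x [hx ->]]; exists (emb c * x); split; first exact: hZ.
    by rewrite mulrCA.
- exists (emb e * a); split; first by exists a.
  by rewrite mulf_neq0 // emb_eq0.
- exists d; split => // _ [x [hx ->]].
  by rewrite mulrCA; apply: DsetM; [exact: Dset_emb| exact: hd].
Qed.

Lemma fi_principal (e : D) : e != 0 -> frac_ideal (principal (emb e)).
Proof. move=> e0; exact: fi_kscale e0 fiDset. Qed.

Lemma principal1 : principal 1 = DS.
Proof.
apply: kseteq_eq => z; split; first by move=> [a [ha ->]]; rewrite mul1r.
by move=> hz; exists z; rewrite mul1r.
Qed.

Lemma fi_ksum (A B : K -> Prop) : frac_ideal A -> frac_ideal B ->
  frac_ideal (ksum A B).
Proof.
move=> [[a0 aD aZ] [a [ha an]] [d [d0 hd]]] [[b0 bD bZ] _ [e [e0 he]]]; split.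
- split.
  + by exists 0, 0; rewrite addr0.
  + move=> _ _ [x1 [y1 [h1 h2 ->]]] [x2 [y2 [h3 h4 ->]]].
    exists (x1 + x2), (y1 + y2); split; [exact: aD| exact: bD|].
    by rewrite addrACA.
  + move=> c _ [x [y [hx hy ->]]]; exists (emb c * x), (emb c * y); split;
      [exact: aZ| exact: bZ| by rewrite mulrDr].
- by exists a; split => //; exists a, 0; split => //; rewrite addr0.
- exists (d * e); split; first by rewrite mulf_neq0.
  move=> _ [x [y [hx hy ->]]]; rewrite embM mulrDr; apply: DsetD.
  + by rewrite mulrAC mulrC; apply: DsetM; [exact: Dset_emb| exact: hd].
  + by rewrite -mulrA; apply: DsetM; [exact: Dset_emb| exact: he].
Qed.

Lemma span_sm (s : seq K) : submodule (Defs.span s).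
Proof.
split.
- by exists (fun _ => 0); rewrite big1 // => i _; rewrite emb0 mul0r.
- move=> _ _ [c1 ->] [c2 ->]; exists (fun i => c1 i + c2 i).
  by rewrite -big_split /=; apply: eq_bigr => i _; rewrite embD mulrDl.
- move=> d _ [c ->]; exists (fun i => d * c i).
  by rewrite mulr_sumr; apply: eq_bigr => i _; rewrite embM mulrA.
Qed.

Lemma span_in (s : seq K) x : x \in s -> Defs.span s x.
Proof.
move=> xs; exists (fun i => if i == index x s then 1 else 0).
have hi : (index x s < size s)%N by rewrite index_mem.
rewrite (bigD1 (Ordinal hi))//= eqxx emb1 mul1r nth_index //.
rewrite big1 ?addr0 // => i /eqP ne; case: eqP => [e|_]; last by rewrite emb0 mul0r.
by case: ne; apply: val_inj.
Qed.

Lemma span_sub (s : seq K) (A : K -> Prop) : submodule A ->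
  (forall x, x \in s -> A x) -> ksubset (Defs.span s) A.
Proof.
move=> sA h _ [c ->]; apply: sm_sum => // i.
case: sA => _ _ hZ; apply: hZ; apply: h; exact: mem_nth.
Qed.

Lemma denom_seq (s : seq K) : exists d : D, d != 0 /\
  forall x, x \in s -> DS (emb d * x).
Proof.
elim: s => [|x s [d [d0 hd]]]; first by exists 1; split => //; exact: oner_neq0.
have [p [q [q0 hq]]] := fracP x.
exists (q * d); split; first by rewrite mulf_neq0.
move=> y; rewrite inE => /orP[/eqP ->|ys].
  by rewrite embM mulrAC [emb q * x]mulrC hq; apply: DsetM; exact: Dset_emb.
by rewrite embM -mulrA; apply: DsetM; [exact: Dset_emb| exact: hd].
Qed.

Lemma fi_span (s : seq K) : knonzero (Defs.span s) -> frac_ideal (Defs.span s).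
Proof.
move=> nz; split => //; first exact: span_sm.
have [d [d0 hd]] := denom_seq s; exists d; split => // _ [c ->].
rewrite mulr_sumr; apply: Dset_sum => i; rewrite mulrCA.
apply: DsetM; first exact: Dset_emb.
have [lt|ge] := ltnP i (size s); first by apply: hd; exact: mem_nth.
by rewrite nth_default // mulr0; exact: Dset0.
Qed.

Lemma fi_fin_gen (J : K -> Prop) : fin_gen J -> knonzero J -> frac_ideal J.
Proof.
move=> [s hs] nz; rewrite (kseteq_eq hs) in nz *; exact: fi_span.
Qed.

Lemma fi_kmul (A B : K -> Prop) : frac_ideal A -> frac_ideal B ->
  frac_ideal (kmul A B).
Proof.
move=> [[a0 aD aZ] [a [ha an]] [d [d0 hd]]] [[b0 bD bZ] [b [hb bn]] [e [e0 he]]]; split.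
- split.
  + by exists 0%N, (fun _ => 0), (fun _ => 0); split => //; rewrite big_ord0.
  + move=> _ _ [n1 [a1 [b1 [h1 ->]]]] [n2 [a2 [b2 [h2 ->]]]].
    exists (n1 + n2)%N, (fun i => if (i < n1)%N then a1 i else a2 (i - n1)%N),
      (fun i => if (i < n1)%N then b1 i else b2 (i - n1)%N); split.
      move=> i lti; case: ifP => hi; first exact: h1.
      apply: h2; rewrite ltn_subLR //; rewrite leqNgt hi //.
    rewrite big_split_ord /=; congr (_ + _); apply: eq_bigr => i _ /=.
      by rewrite ltn_ord.
    by rewrite ltnNge leq_addr /= addKn.
  + move=> c _ [n [a1 [b1 [h1 ->]]]]; exists n, (fun i => emb c * a1 i), b1; split.
      by move=> i /h1 [h3 h4]; split => //; exact: aZ.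
    by rewrite mulr_sumr; apply: eq_bigr => i _; rewrite mulrA.
- exists (a * b); split; last by rewrite mulf_neq0.
  exists 1%N, (fun _ => a), (fun _ => b); split => //.
  by rewrite big_ord1.
- exists (d * e); split; first by rewrite mulf_neq0.
  move=> _ [n [a1 [b1 [h1 ->]]]]; rewrite mulr_sumr; apply: Dset_sum => i.
  have [h3 h4] := h1 i (ltn_ord i).
  rewrite embM mulrACA; apply: DsetM; [exact: hd| exact: he].
Qed.

Lemma fi_kprod (s : seq (K -> Prop)) :
  (forall i, (i < size s)%N -> frac_ideal (nth DS s i)) -> frac_ideal (kprod s).
Proof.
elim: s => [|A s IH] h /=; first exact: fiDset.
apply: fi_kmul; first exact: (h 0%N).
by apply: IH => i hi; apply: (h i.+1).
Qed.

Definition kunion (F : (K -> Prop) -> Prop) : K -> Prop :=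
  fun z => exists2 X, F X & X z.

Lemma zorn_pred (Q : (K -> Prop) -> Prop) (A0 : K -> Prop) : Q A0 -> (exists z, A0 z) ->
  (forall F : (K -> Prop) -> Prop, (forall X, F X -> Q X) -> (exists X, F X) ->
     (forall X Y, F X -> F Y -> ksubset X Y \/ ksubset Y X) -> Q (kunion F)) ->
  exists N, Q N /\ forall N', Q N' -> ksubset N N' -> ksubset N' N.
Proof.
move=> QA0 [z0 Az0] hch.
pose P := fun X : K -> Prop => (forall z, ~ X z) \/ Q X.
have [|A [PA maxA]] := @classical_sets.Zorn_bigcup K P.
  move=> F FP tot.
  have [[X0 FX0 [z Xz]]|none] := classic (exists2 X, F X & exists z, X z); last first.
    left => z [X FX Xz]; apply: none; exists X => //; by exists z.
  right.
  have QX0 : Q X0 by case: (FP X0 FX0) => // h; case: (h z Xz).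
  have -> : classical_sets.bigcup F id = kunion (fun X => F X /\ Q X).
    apply: kseteq_eq => w; split.
      case=> X FX Xw; exists X => //; split => //.
      by case: (FP X FX) => // h; case: (h w Xw).
    by case=> X [FX _] Xw; exists X.
  apply: hch; first by move=> X [].
    by exists X0.
  by move=> X Y [FX _] [FY _]; apply: tot.
have QA : Q A.
  case: PA => // empty; exfalso; apply: (maxA A0); last by right.
  split; first by move=> w /empty.
  by move=> h; apply: (empty z0); apply: h.
exists A; split => // N' QN' AN'; apply: NNPP => nsub.
by apply: (maxA N'); [split| right].
Qed.

Lemma ksum_sm (A B : K -> Prop) : submodule A -> submodule B -> submodule (ksum A B).
Proof.
move=> [a0 aD aZ] [b0 bD bZ]; split.
- by exists 0, 0; rewrite addr0.
- move=> _ _ [x1 [y1 [h1 h2 ->]]] [x2 [y2 [h3 h4 ->]]].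
  exists (x1 + x2), (y1 + y2); split; [exact: aD| exact: bD|].
  by rewrite addrACA.
- move=> c _ [x [y [hx hy ->]]]; exists (emb c * x), (emb c * y); split;
    [exact: aZ| exact: bZ| by rewrite mulrDr].
Qed.

Lemma principal_sm (x : K) : submodule (principal x).
Proof.
split.
- by exists 0; split; [exact: Dset0| rewrite mulr0].
- move=> _ _ [a [ha ->]] [b [hb ->]]; exists (a + b); split; first exact: DsetD.
  by rewrite mulrDr.
- move=> c _ [a [ha ->]]; exists (emb c * a); split; last by rewrite mulrCA.
  by apply: DsetM => //; exact: Dset_emb.
Qed.

Lemma span_cat_l (s1 s2 : seq K) : ksubset (Defs.span s1) (Defs.span (s1 ++ s2)).
Proof.
apply: span_sub; first exact: span_sm.
by move=> x xs; apply: span_in; rewrite mem_cat xs.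
Qed.
Lemma span_cat_r (s1 s2 : seq K) : ksubset (Defs.span s2) (Defs.span (s1 ++ s2)).
Proof.
apply: span_sub; first exact: span_sm.
by move=> x xs; apply: span_in; rewrite mem_cat xs orbT.
Qed.

Lemma split_gens (M : K -> Prop) (t : D) (s0 : seq K) :
  (forall g, g \in s0 -> ksum M (principal (emb t)) g) ->
  exists ms : seq K, (forall m, m \in ms -> M m) /\
    forall g, g \in s0 -> ksum (Defs.span ms) (principal (emb t)) g.
Proof.
elim: s0 => [|g s IH] h; first by exists [::].
have h' : forall y, y \in s -> ksum M (principal (emb t)) y.
  by move=> y ys; apply: h; rewrite inE ys orbT.
have [ms [hm hg]] := IH h'.
have [m [p [Mm hp ->]]] := h g (mem_head _ _).
exists (m :: ms); split.
  by move=> y; rewrite inE => /orP[/eqP ->|]; [| exact: hm].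
move=> y; rewrite inE => /orP[/eqP ->|ys].
  by exists m, p; split => //; apply: span_in; exact: mem_head.
have [m1 [p1 [hm1 hp1 ->]]] := hg y ys; exists m1, p1; split => //.
exact: (@span_cat_r [:: m] ms).
Qed.

Section Star.
Variable star : (K -> Prop) -> (K -> Prop).
Hypothesis Hs : is_star_op star.
Hypothesis Hfc : finite_character star.

Lemma st_fi A : frac_ideal A -> frac_ideal (star A).
Proof. by case: Hs => h _; apply: h. Qed.
Lemma st_ext A : frac_ideal A -> ksubset A (star A).
Proof. by case: Hs => _ [_ _ h _ _]; apply: h. Qed.
Lemma st_mono A B : frac_ideal A -> frac_ideal B -> ksubset A B ->
  ksubset (star A) (star B).
Proof. by case: Hs => _ [_ _ _ h _]; apply: h. Qed.
Lemma st_idem A : frac_ideal A -> star (star A) = star A.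
Proof. by case: Hs => _ [_ _ _ _ h] hA; apply: kseteq_eq; apply: h. Qed.
Lemma st_scale (e : D) A : e != 0 -> frac_ideal A ->
  star (kscale (emb e) A) = kscale (emb e) (star A).
Proof.
case: Hs => _ [_ h _ _ _] e0 hA; apply: kseteq_eq; apply: h => //.
by rewrite emb_eq0.
Qed.
Lemma st_Dset : star DS = DS.
Proof.
case: Hs => _ [h _ _ _ _]; rewrite -principal1; apply: kseteq_eq; apply: h.
exact: oner_neq0.
Qed.
Lemma st_integral A : frac_ideal A -> integral A -> integral (star A).
Proof.
move=> hA iA z hz; rewrite -st_Dset; apply: (st_mono hA fiDset iA hz).
Qed.
Lemma star_ideal_star A : frac_ideal A -> star_ideal star (star A).
Proof. by move=> hA; split; [exact: st_fi| rewrite st_idem]. Qed.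

Lemma proper_iff (N : K -> Prop) : submodule N -> (ksubset DS N <-> N 1).
Proof. by move=> sN; split => [h|h]; [apply: h; exact: Dset1| exact: sm1]. Qed.

Lemma star_idealE A : star_ideal star A -> star A = A.
Proof. by case=> _ h; apply: kseteq_eq. Qed.

Lemma max_facts M : max_star star M ->
  [/\ frac_ideal M, submodule M, integral M, ~ M 1 & star M = M].
Proof.
case=> [[fM eM] [iM pM] _]; split => //; first by case: fM.
  by move=> h1; apply: pM; apply/proper_iff => //; case: fM.
exact: kseteq_eq.
Qed.

Lemma principal_integral (t : D) : integral (principal (emb t)).
Proof. by move=> _ [w [hw ->]]; apply: DsetM => //; exact: Dset_emb. Qed.

Lemma max_gen M (t : D) : max_star star M -> ~ M (emb t) ->
  star (ksum M (principal (emb t))) 1.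
Proof.
move=> hM Mt; have [fM sM iM M1 sMM] := max_facts hM.
have t0 : t != 0 by apply/eqP => t0; apply: Mt; rewrite t0 emb0; case: sM.
have fS : frac_ideal (ksum M (principal (emb t))).
  by apply: fi_ksum => //; exact: fi_principal.
have iS : integral (ksum M (principal (emb t))).
  move=> _ [a [b [ha hb ->]]]; apply: DsetD; [exact: iM| exact: principal_integral hb].
apply: NNPP => N1.
case: hM => _ _ /(_ (star (ksum M (principal (emb t))))) h.
have pS : proper_integral (star (ksum M (principal (emb t)))).
  split; first exact: st_integral.
  by move=> h1; apply: N1; apply: h1; exact: Dset1.
have MS : ksubset M (star (ksum M (principal (emb t)))).
  move=> z hz; apply: st_ext => //; exists z, 0; split => //; last by rewrite addr0.
  by exists 0; split; [exact: Dset0| rewrite mulr0].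
have tS : star (ksum M (principal (emb t))) (emb t).
  apply: st_ext => //; exists 0, (emb t); split; [by case: sM| |by rewrite add0r].
  by exists 1; split; [exact: Dset1| rewrite mulr1].
by apply: Mt; apply/(h (star_ideal_star fS) pS MS).
Qed.

Lemma max_prime M : max_star star M -> prime_ideal M.
Proof.
move=> hM; have [fM sM iM M1 sMM] := max_facts hM.
split => // a b hab; apply: NNPP => /not_or_and [Ma Mb].
have b0 : b != 0 by apply/eqP => b0; apply: Mb; rewrite b0 emb0; case: sM.
have h1 := max_gen hM Ma.
have fS : frac_ideal (ksum M (principal (emb a))).
  by apply: fi_ksum => //; apply: fi_principal; apply/eqP => a0; apply: Ma;
    rewrite a0 emb0; case: sM.
apply: Mb; rewrite -sMM.
have : kscale (emb b) (star (ksum M (principal (emb a)))) (emb b).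
  by exists 1; split => //; rewrite mulr1.
rewrite -st_scale //; apply: st_mono => //; first exact: fi_kscale.
move=> _ [_ [[m [_ [hm [w [hw ->]] ->]]] ->]].
rewrite mulrDr; have [_ hD _] := sM; apply: hD.
  by apply: smM => //; exact: Dset_emb.
by rewrite mulrA mulrC [emb b * _]mulrC; apply: smM.
Qed.

Lemma prime_pow P (f : D) n : prime_ideal P -> P (emb f ^+ n) -> P (emb f).
Proof.
case=> sP iP P1 pP; elim: n => [|n IH]; first by rewrite expr0.
rewrite exprS -embX => /pP [] //; rewrite embX; exact: IH.
Qed.

Lemma prod_avoid (P : K -> Prop) (s : seq (K -> Prop)) : prime_ideal P ->
  (forall i, (i < size s)%N -> integral (nth DS s i) /\ ~ ksubset (nth DS s i) P) ->
  exists d : D, kprod s (emb d) /\ ~ P (emb d).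
Proof.
move=> hP; elim: s => [|A s IH] h.
  by exists 1; rewrite emb1; split; [exact: Dset1| case: hP].
have [iA nA] := h 0%N isT.
have [a ha] := not_all_ex_not _ _ nA.
have [Aa Pa] := imply_to_and _ _ ha.
have [a' ea] := iA a Aa; subst a.
have [d [hd Pd]] := IH (fun i hi => h i.+1 hi).
exists (a' * d); split.
  exists 1%N, (fun _ => emb a'), (fun _ => emb d); split => //.
  by rewrite big_ord1 embM.
by rewrite embM; case: hP => _ _ _ pP /pP [].
Qed.

Lemma homog_fi I : star_homog star I -> frac_ideal I.
Proof. by case=> [[[fI _] _] _ _]. Qed.

Lemma chain_fin (F : (K -> Prop) -> Prop) (s : seq K) : (exists X, F X) ->
  (forall X Y, F X -> F Y -> ksubset X Y \/ ksubset Y X) ->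
  (forall x, x \in s -> kunion F x) -> exists2 X, F X & forall x, x \in s -> X x.
Proof.
move=> [X0 FX0] tot; elim: s => [|x s IH] h; first by exists X0.
have h' : forall y, y \in s -> kunion F y by move=> y ys; apply: h; rewrite inE ys orbT.
have [X FX hX] := IH h'.
have [Y FY Yx] := h x (mem_head _ _).
have [XY|YX] := tot X Y FX FY.
  exists Y => // y; rewrite inE => /orP[/eqP->//|ys]; exact/XY/hX.
exists X => // y; rewrite inE => /orP[/eqP->|ys]; [exact: YX| exact: hX].
Qed.

Lemma chain_sm (F : (K -> Prop) -> Prop) : (exists X, F X) ->
  (forall X Y, F X -> F Y -> ksubset X Y \/ ksubset Y X) ->
  (forall X, F X -> submodule X) -> submodule (kunion F).
Proof.
move=> [X0 FX0] tot hs; split.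
- by exists X0 => //; case: (hs X0 FX0).
- move=> a b [X FX Xa] [Y FY Yb].
  have [XY|YX] := tot X Y FX FY.
    by exists Y => //; case: (hs Y FY) => _ hD _; apply: hD => //; exact: XY.
  by exists X => //; case: (hs X FX) => _ hD _; apply: hD => //; exact: YX.
- move=> d a [X FX Xa]; exists X => //; by case: (hs X FX) => _ _ hZ; apply: hZ.
Qed.

Lemma exists_max A : frac_ideal A -> integral A -> ~ star A 1 ->
  exists N, max_star star N /\ ksubset (star A) N.
Proof.
move=> fA iA nA.
pose Q := fun N => [/\ star_ideal star N, integral N, ~ N 1 & ksubset (star A) N].
have QA : Q (star A).
  by split => //; [exact: star_ideal_star| exact: st_integral].
have neA : exists z, star A z by case: (st_fi fA) => _ [z [hz _]] _; exists z.
have [|N [[sN iN N1 AN] maxN]] := zorn_pred QA neA.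
  move=> F FQ [X0 FX0] tot.
  have smU : submodule (kunion F).
    by apply: chain_sm => //; [exists X0| move=> X /FQ [[[]]]].
  have iU : integral (kunion F) by move=> z [X FX Xz]; case: (FQ X FX) => _ iX _ _; exact: iX.
  have nzU : knonzero (kunion F).
    by case: (FQ X0 FX0) => [[[_ [z [hz z0]] _] _] _ _ _]; exists z; split => //; exists X0.
  have fU : frac_ideal (kunion F) by exact: fi_integral.
  split => //.
  - split => // z; split => [hz|]; last by apply: st_ext.
    case: (Hfc fU z) => /(_ hz) [J [gJ nJ JU sJ]] _.
    case: gJ => s hs; rewrite (kseteq_eq hs) in nJ JU sJ.
    have [X FX hX] := @chain_fin F s (ex_intro _ X0 FX0) tot (fun x xs => JU x (span_in xs)).
    case: (FQ X FX) => [[fX eX] _ _ _].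
    exists X => //; rewrite -(kseteq_eq eX).
    apply: (st_mono (fi_span nJ) fX) sJ; apply: span_sub => //; by case: fX.
  - by case=> X FX X1; case: (FQ X FX) => _ _ h _; exact: h.
  - by move=> z hz; exists X0 => //; case: (FQ X0 FX0) => _ _ _; apply.
exists N; split => //; split => //.
  split => // h; apply: N1; apply: h; exact: Dset1.
move=> N' sN' [iN' pN'] NN' z; split; last exact: NN'.
apply: (maxN N') => //; split => //.
  by move=> h1; apply: pN'; apply/proper_iff => //; case: sN' => [[]].
by move=> w hw; apply: NN'; apply: AN.
Qed.

Lemma stepA M I (e : D) : max_star star M -> height_one M -> frac_ideal I ->
  integral I -> ksubset I M -> M (emb e) ->
  exists t k, ~ M (emb t) /\ I (emb t * emb e ^+ k).
Proof.
move=> hM hoM fI iI IM Me; apply: NNPP => H.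
have av : forall t k, ~ M (emb t) -> ~ I (emb t * emb e ^+ k).
  by move=> t k Mt It; apply: H; exists t, k.
have [fM sM iM M1 sMM] := max_facts hM.
have pM := max_prime hM.
pose Q := fun P => [/\ submodule P, integral P, ksubset I P &
  forall t k, ~ M (emb t) -> ~ P (emb t * emb e ^+ k)].
have QI : Q I by split => //; case: fI.
have neI : exists z, I z by exists 0; case: fI => [[]].
have [|P [[sP iP IP avP] maxP]] := zorn_pred QI neI.
  move=> F FQ neF tot; split.
  - by apply: chain_sm => // X /FQ [].
  - by move=> z [X /FQ [_ iX _ _] Xz]; exact: iX.
  - by case: neF => X0 FX0 z Iz; exists X0 => //; case: (FQ X0 FX0) => _ _ h _; exact: h.
  - by move=> t k Mt [X /FQ [_ _ _ h] Xz]; exact: (h t k Mt).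
have P1 : ~ P 1 by move=> h; apply: (avP 1 0%N); rewrite emb1 ?expr0 ?mulr1.
have ext : forall c : D, ~ P (emb c) -> exists t k q w, [/\ ~ M (emb t), P q, DS w &
    emb t * emb e ^+ k = q + emb c * w].
  move=> c nc; apply: NNPP => hno.
  have QS : Q (ksum P (principal (emb c))).
    split.
    - by apply: ksum_sm => //; exact: principal_sm.
    - move=> _ [a [b [ha hb ->]]]; apply: DsetD; [exact: iP| exact: principal_integral hb].
    - move=> z /IP Pz; exists z, 0; split => //; last by rewrite addr0.
      by exists 0; split; [exact: Dset0| rewrite mulr0].
    - move=> t k Mt [q [p [hq [w [hw ->]] he]]]; apply: hno.
      by exists t, k, q, w; split.
  apply: nc; apply: (maxP _ QS).
    move=> z Pz; exists z, 0; split => //; last by rewrite addr0.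
    by exists 0; split; [exact: Dset0| rewrite mulr0].
  exists 0, (emb c); split; [by case: sP| |by rewrite add0r].
  by exists 1; split; [exact: Dset1| rewrite mulr1].
have pr : forall a b : D, P (emb a * emb b) -> P (emb a) \/ P (emb b).
  move=> a b hab; apply: NNPP => /not_or_and [na nb].
  have [t1 [k1 [q1 [w1 [Mt1 Pq1 hw1 e1]]]]] := ext a na.
  have [t2 [k2 [q2 [w2 [Mt2 Pq2 hw2 e2]]]]] := ext b nb.
  apply: (avP (t1 * t2) (k1 + k2)).
    by rewrite embM; case: pM => _ _ _ pp /pp [].
  have [_ hD _] := sP.
  rewrite embM exprD mulrACA e1 mulrDl; apply: (hD).
    rewrite mulrC; apply: smM => //.
    by apply: DsetM; [exact: Dset_emb| apply: DsetX; exact: Dset_emb].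
  rewrite e2 mulrDr; apply: (hD).
    by apply: smM => //; apply: DsetM => //; exact: Dset_emb.
  have -> : emb a * w1 * (emb b * w2) = (w1 * w2) * (emb a * emb b) by ring.
  by apply: smM => //; exact: DsetM.
have hP : prime_ideal P by split.
have PM : ksubset P M.
  move=> z Pz; have [d ed] := iP z Pz; subst z.
  apply: NNPP => Md; apply: (avP d 0%N Md); by rewrite expr0 mulr1.
case: hoM => _ _ /(_ P hP PM) [P0|PMe].
  case: fI => _ [z [Iz z0]] _; move/eqP: z0; apply.
  by apply/P0; apply: IP.
apply: (avP 1 1%N); first by rewrite emb1.
by rewrite emb1 mul1r expr1; apply/PMe.
Qed.

Lemma stepB M I (t w : D) : max_star star M -> star_homog star I -> ksubset I M ->
  ~ M (emb t) -> I (emb t * emb w) -> I (emb w).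
Proof.
move=> hM [[[fI eI] [G [[gs hG] nG eIG]]] [iI pI] hom] IM Mt Itw.
rewrite (kseteq_eq hG) in nG eIG.
have eI' : I = star (Defs.span gs) := kseteq_eq eIG.
have sII : star I = I := kseteq_eq eI.
have [fM sM iM M1 sMM] := max_facts hM.
have t0 : t != 0 by apply/eqP => t0; apply: Mt; rewrite t0 emb0; case: sM.
have fG := fi_span nG.
have GI : ksubset (Defs.span gs) I by rewrite eI'; apply: st_ext.
have fS : frac_ideal (ksum (Defs.span gs) (principal (emb t))).
  exact: fi_ksum fG (fi_principal t0).
have [sI _ _] : submodule I by case: fI.
have S1 : star (ksum (Defs.span gs) (principal (emb t))) 1.
  apply: NNPP => nS.
  have iS : integral (ksum (Defs.span gs) (principal (emb t))).
    move=> _ [a [b [ha hb ->]]]; apply: DsetD; [exact/iI/GI| exact: principal_integral hb].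
  have [N [hN SN]] := exists_max fS iS nS.
  have [fN sN iN N1 sNN] := max_facts hN.
  have IN : ksubset I N.
    rewrite {1}eI' => z hz; apply: SN; apply: (st_mono fG fS _ hz).
    move=> y hy; exists y, 0; split => //; last by rewrite addr0.
    by exists 0; split; [exact: Dset0| rewrite mulr0].
  have tN : N (emb t).
    apply: SN; apply: st_ext => //; exists 0, (emb t); split; [by case: fG => [[]]| |by rewrite add0r].
    by exists 1; split; [exact: Dset1| rewrite mulr1].
  have fMS : frac_ideal (ksum M (principal (emb t))).
    exact: fi_ksum fM (fi_principal t0).
  case: (Hfc fMS 1) => /(_ (max_gen hM Mt)) [J0 [gJ0 nJ0 J0sub sJ0]] _.
  case: gJ0 => s0 hs0; rewrite (kseteq_eq hs0) in nJ0 J0sub sJ0.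
  have [ms [hms hg]] := split_gens (fun g gs => J0sub g (span_in gs)).
  have nJ : knonzero (Defs.span (gs ++ ms)).
    by case: nG => z [hz z0]; exists z; split => //; exact: span_cat_l.
  have nL : knonzero (Defs.span (emb t :: gs)).
    by case: nG => z [hz z0]; exists z; split => //; exact: (@span_cat_r [:: emb t] gs).
  have fJ' := fi_span nJ; have fL' := fi_span nL.
  have JM : ksubset (star (Defs.span (gs ++ ms))) M.
    rewrite -sMM; apply: st_mono => //; apply: span_sub => // x; rewrite mem_cat.
    by case/orP => [xg|xm]; [exact/IM/GI/span_in| exact: hms].
  have LN : ksubset (star (Defs.span (emb t :: gs))) N.
    rewrite -sNN; apply: st_mono => //; apply: span_sub => // x; rewrite inE.
    by case/orP => [/eqP ->|xg]; [exact: tN| exact/IN/GI/span_in].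
  have ftJ : finite_type star (star (Defs.span (gs ++ ms))).
    split; first exact: star_ideal_star.
    by exists (Defs.span (gs ++ ms)); split => //; exists (gs ++ ms).
  have ftL : finite_type star (star (Defs.span (emb t :: gs))).
    split; first exact: star_ideal_star.
    by exists (Defs.span (emb t :: gs)); split => //; exists (emb t :: gs).
  have pJ : proper_integral (star (Defs.span (gs ++ ms))).
    split; first by move=> z /JM; exact: iM.
    by move=> h; apply: M1; apply: JM; apply: h; exact: Dset1.
  have pL : proper_integral (star (Defs.span (emb t :: gs))).
    split; first by move=> z /LN; exact: iN.
    by move=> h; apply: N1; apply: LN; apply: h; exact: Dset1.
  have IJ : ksubset I (star (Defs.span (gs ++ ms))).
    by rewrite {1}eI'; apply: st_mono => //; exact: span_cat_l.
  have IL : ksubset I (star (Defs.span (emb t :: gs))).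
    by rewrite {1}eI'; apply: st_mono => //; exact: (@span_cat_r [:: emb t] gs).
  apply: (hom _ _ ftJ pJ ftL pL IJ IL).
  have fJL := fi_ksum (st_fi fJ') (st_fi fL').
  have [sJL _ _] := fJL.
  move=> z; split.
    apply: st_integral => //; move=> _ [a [b [ha hb ->]]]; apply: DsetD.
      by apply: iM; exact: JM.
    by apply: iN; exact: LN.
  move=> hz; have [sJL2 _ _] := st_fi fJL; apply: (sm1 sJL2) hz => {z}.
  apply: (st_mono (fi_span nJ0) fJL _ sJ0).
  apply: span_sub => // g /hg [m [p [hm [v [hv ->]] ->]]].
  exists m, (emb t * v); split => //.
    by apply: st_ext => //; exact: span_cat_r.
  rewrite mulrC; apply: smM => //; first by case: (st_fi fL').
  by apply: st_ext => //; apply: span_in; exact: mem_head.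
have [w0|w0] := eqVneq w 0; first by rewrite w0 emb0; exact: sI.
have : kscale (emb w) (star (ksum (Defs.span gs) (principal (emb t)))) (emb w).
  by exists 1; split => //; rewrite mulr1.
rewrite -st_scale // -sII; apply: st_mono => //; first exact: fi_kscale.
move=> _ [_ [[g [p [hg [v [hv ->]] ->]]] ->]].
have -> : emb w * (g + emb t * v) = emb w * g + v * (emb t * emb w) by ring.
have smI : submodule I by case: fI.
have [_ hD _] := smI; apply: hD; last exact: smM.
by apply: smM => //; [exact: Dset_emb| exact: GI].
Qed.

Lemma dir1 : star_SH_type1 star -> star_weakly_Krull star.
Proof.
move=> h1; split.
  move=> x x0 xu; have [s [hs e]] := h1 x x0 xu; exists s; split => //.
  by move=> i /hs [].
move=> M hM; have [fM sM iM M1 sMM] := max_facts hM.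
have pM := max_prime hM.
split; [by case: fM| exact: pM|].
move=> P hP PM; have [sP iP P1 pP] := hP.
have [[x [Px x0]]|nx] := classic (exists x, P x /\ x != 0); last first.
  left => z; split => [Pz|->]; last by case: sP.
  by apply: NNPP => z0; apply: nx; exists z; split => //; apply/eqP.
right => z; split => [|Mz]; first exact: PM.
have [e ee] := iP x Px; subst x.
have e0 : e != 0 by rewrite -emb_eq0.
have eu : e \isn't a GRing.unit.
  apply/negP => eu; apply: P1; rewrite -emb1 -(mulVr eu) embM.
  by apply: smM => //; exact: Dset_emb.
have [s [hs es]] := h1 e e0 eu.
have fs : frac_ideal (kprod s).
  by apply: fi_kprod => i /hs [/homog_fi].
have [i [lti iP']] : exists i, (i < size s)%N /\ ksubset (nth DS s i) P.
  apply: NNPP => nex.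
  have hav : forall i, (i < size s)%N ->
      integral (nth DS s i) /\ ~ ksubset (nth DS s i) P.
    move=> i lti; split; first by have [[_ [iI _] _] _] := hs i lti.
    by move=> sub; apply: nex; exists i.
  have [d [kd Pd]] := prod_avoid hP hav.
  apply: Pd; have := st_ext fs kd; rewrite -(kseteq_eq es).
  by case=> w [hw ->]; rewrite mulrC; apply: smM.
have [[_ _ _] h2] := hs i lti.
have [y0|y0] := eqVneq z 0; first by rewrite y0; case: sP.
have [n [_ hn]] := h2 M hM (fun w hw => PM w (iP' w hw)) z Mz y0.
have [f ef] := iM z Mz; subst z.
apply: (@prime_pow P f n hP); apply: iP'; apply: hn; split.
  by rewrite -embX; exact: Dset_emb.
by exists 1, 1; rewrite emb1; split.
Qed.

Lemma dir2 : star_weakly_Krull star -> star_SH_type1 star.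
Proof.
move=> [hSH hho] x x0 xu; have [s [hs e]] := hSH x x0 xu; exists s; split => //.
move=> i lti; have hI := hs i lti; split => // M hM IM y My y0.
have fI := homog_fi hI.
have [_ [iI _] _] := hI.
have [fM sM iM M1 sMM] := max_facts hM.
have [f ef] := iM y My; subst y.
have [t [k [Mt Itk]]] := stepA hM (hho M hM) fI iI IM My.
exists k.+1; split => //.
move=> _ [[w ->] [a [s' [Ms' eq]]]].
apply: (@stepB M _ (t * s') w hM hI IM).
  by rewrite embM; case: (max_prime hM) => _ _ _ pp /pp [].
rewrite embM -mulrA [emb s' * _]mulrC eq.
have -> : emb t * (emb f ^+ k.+1 * emb a) = (emb a * emb f) * (emb t * emb f ^+ k).
  by rewrite exprS; ring.
have smI : submodule (nth DS s i) by case: fI.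
by apply: smM => //; apply: DsetM; exact: Dset_emb.
Qed.
End Star.
End Basics.

Theorem theoremP2 (D : idomainType)
  (star : ({fraction D} -> Prop) -> ({fraction D} -> Prop)) :
  is_star_op star -> finite_character star ->
  (star_SH_type1 star <-> star_weakly_Krull star).
Proof.
move=> Hs Hfc; split; [exact: dir1| exact: dir2].
Qed.
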